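(* There is a polynomial $p$ such that for all $\varepsilon,\eta\in(0,1]$, every finite nonempty set system $\mathcal{F}$ on a finite ground set $V$ has an $(\varepsilon,\eta)$-clustering with at most $2^{p(1/\varepsilon,1/\eta)}$ clusters.
   Context: Let $\mathcal{F}$ be a finite family of subsets of a finite set $V$. For $x\in V$, $\mathcal{F}_x$ is the set of members of $\mathcal{F}$ containing $x$, and $\mathcal{F}_{xy}=\mathcal{F}_x\cap\mathcal{F}_y$. For $\varepsilon\geq0$, $D_\varepsilon(x)=\{y\in V:|\mathcal{F}_{xy}|\leq\varepsilon|\mathcal{F}|\}$ and $D(x)=D_0(x)$. An $(\varepsilon,\eta)$-cluster is a set $X\subseteq V$ with $|D(x)\setminus D_\varepsilon(y)|\leq\eta|V|$ for all $x,y\in X$; an $(\varepsilon,\eta)$-clustering is a partition of $V$ into $(\varepsilon,\eta)$-clusters, and its size is the number of parts. *)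

(* Defs.v *)
From HB Require Import structures.
From mathcomp Require Import all_boot all_order all_algebra.
From mathcomp Require Import reals exp.
Set Implicit Arguments. Unset Strict Implicit. Unset Printing Implicit Defensive.
Import Order.TTheory GRing.Theory Num.Theory.
Local Open Scope ring_scope.

Section SetSystems.
Variables (R : realType) (V : finType) (F : {set {set V}}).

Definition famx (x : V) : {set {set V}} := [set A in F | x \in A].
Definition famxy (x y : V) : {set {set V}} := famx x :&: famx y.

Definition Deps (eps : R) (x : V) : {set V} :=
  [set y | (#|famxy x y|%:R : R) <= eps * #|F|%:R].
Definition D0 (x : V) : {set V} := Deps 0 x.

Definition is_cluster (eps eta : R) (X : {set V}) : Prop :=
  forall x y, x \in X -> y \in X ->
    (#|D0 x :\: Deps eps y|%:R : R) <= eta * #|V|%:R.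

Definition is_clustering (eps eta : R) (P : {set {set V}}) : Prop :=
  partition P [set: V] /\ forall X, X \in P -> is_cluster eps eta X.
End SetSystems.

(* Bivariate polynomial p(x, y) represented as p : {poly {poly R}},
   inner variable x, outer variable y. *)
Definition eval2 (R : realType) (p : {poly {poly R}}) (x y : R) : R :=
  (p.[y%:P]).[x].

(* Main.v *)
Require Import Defs.
From HB Require Import structures.
From mathcomp Require Import all_boot all_order all_algebra.
From mathcomp Require Import reals exp.
From mathcomp Require Import ring lra zify.
Import Order.TTheory GRing.Theory Num.Theory.
Local Open Scope ring_scope.
Set Implicit Arguments. Unset Strict Implicit. Unset Printing Implicit Defensive.

Section LinAlg.
Variables (R : realType) (V : finType) (F : {set {set V}}).

Local Notation vec := {ffun {set V} -> R}.
Definition sc (k : R) (a : vec) : vec := [ffun A => k * a A].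
Definition ip (a b : vec) : R := (\sum_(A in F) a A * b A) / #|F|%:R.

Lemma ipC (a b : vec) : ip a b = ip b a.
Proof. by rewrite /ip; congr (_ / _); apply: eq_bigr => A _; rewrite mulrC. Qed.

Lemma ipDl (a b c : vec) : ip (a + b) c = ip a c + ip b c.
Proof.
by rewrite /ip -mulrDl -big_split /=; congr (_ / _); apply: eq_bigr => A _; rewrite ffunE mulrDl.
Qed.

Lemma ipZl (k : R) (a c : vec) : ip (sc k a) c = k * ip a c.
Proof.
rewrite /ip mulrA mulr_sumr; congr (_ / _); apply: eq_bigr => A _.
by rewrite ffunE mulrA.
Qed.

Lemma ipNl (a c : vec) : ip (- a) c = - ip a c.
Proof.
have -> : - a = sc (-1) a by apply/ffunP => A; rewrite !ffunE mulN1r.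
by rewrite ipZl mulN1r.
Qed.

Lemma ipBl (a b c : vec) : ip (a - b) c = ip a c - ip b c.
Proof. by rewrite ipDl ipNl. Qed.

Lemma ip0l (c : vec) : ip 0 c = 0.
Proof. by rewrite /ip big1 ?mul0r // => A _; rewrite ffunE mul0r. Qed.

Lemma ip_suml (I : Type) (r : seq I) (f : I -> vec) c :
  ip (\sum_(i <- r) f i) c = \sum_(i <- r) ip (f i) c.
Proof.
elim: r => [|i r IH]; first by rewrite !big_nil ip0l.
by rewrite !big_cons ipDl IH.
Qed.

Lemma ipZr (k : R) (a c : vec) : ip a (sc k c) = k * ip a c.
Proof. by rewrite ipC ipZl ipC. Qed.
Lemma ipBr (a b c : vec) : ip a (b - c) = ip a b - ip a c.
Proof. by rewrite ipC ipBl !(ipC a). Qed.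

Lemma ip_ge0 (a : vec) : 0 <= ip a a.
Proof.
rewrite /ip divr_ge0 // sumr_ge0 // => A _.
by rewrite -expr2 sqr_ge0.
Qed.

Lemma ip_eq0 (a c : vec) : ip a a = 0 -> ip a c = 0.
Proof.
rewrite /ip.
have [F0|Fn0] := eqVneq #|F| 0%N; first by rewrite F0 invr0 !mulr0.
move/eqP; rewrite mulf_eq0 invr_eq0 pnatr_eq0 (negbTE Fn0) orbF => /eqP h.
have hA : forall A, A \in F -> a A * a A = 0.
  by apply: (psumr_eq0P _ h) => A _; rewrite -expr2 sqr_ge0.
by rewrite big1 ?mul0r // => A /hA /eqP; rewrite mulf_eq0 orbb => /eqP ->; rewrite mul0r.
Qed.

Definition P (L : seq vec) (v : vec) : vec := \sum_(u <- L) sc (ip v u) u.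
Definition res (L : seq vec) (v : vec) : vec := v - P L v.

Fixpoint ortho (L : seq vec) : Prop :=
  if L is u :: L' then ip u u = 1 /\ (forall u', u' \in L' -> ip u u' = 0) /\ ortho L'
  else True.

Lemma ortho_unit L u : ortho L -> u \in L -> ip u u = 1.
Proof.
elim: L => [|u0 L IH] //= [h0 [_ hL]]; rewrite in_cons => /orP[/eqP ->//|].
exact: IH.
Qed.

Lemma ipP_orth L v c : (forall u, u \in L -> ip u c = 0) -> ip (P L v) c = 0.
Proof.
move=> h; rewrite /P ip_suml big1_seq // => u /andP[_ hu].
by rewrite ipZl h // mulr0.
Qed.

Lemma res_props L v : ortho L ->
  (forall u, u \in L -> ip (res L v) u = 0) /\
  ip (res L v) (res L v) = ip v v - \sum_(u <- L) (ip v u) ^+ 2.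
Proof.
elim: L => [|u L IH] /=.
  move=> _; rewrite /res /P !big_nil subr0; split => //; by rewrite subr0.
move=> [huu [hu' hL]]; have [IHo IHn] := IH hL.
have eres : res (u :: L) v = res L v - sc (ip v u) u.
  by rewrite /res /P big_cons opprD addrA addrAC.
have ewu : ip (res L v) u = ip v u.
  rewrite /res ipBl ipP_orth ?subr0 // => u' hu''.
  by rewrite ipC hu'.
split.
  move=> u0; rewrite in_cons => /orP[/eqP ->|h0].
    by rewrite eres ipBl ipZl ewu huu mulr1 subrr.
  by rewrite eres ipBl ipZl IHo // hu' // mulr0 subr0.
rewrite eres big_cons; move: ewu IHn; move: (res L v) => w ewu IHn.
rewrite !ipBl !ipBr !ipZl !ipZr (ipC u) ewu huu IHn.
ring.
Qed.

Lemma bessel L v : ortho L -> \sum_(u <- L) (ip v u) ^+ 2 <= ip v v.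
Proof.
move=> hL; have [_ hn] := res_props v hL.
have := ip_ge0 (res L v); rewrite hn; lra.
Qed.

End LinAlg.

Section Build.
Variables (R : realType) (V : finType) (F : {set {set V}}).
Hypothesis hF : F != set0.
Local Notation vec := {ffun {set V} -> R}.
Local Notation ip := (@ip R V F).
Local Notation res := (@res R V F).
Local Notation ortho := (@ortho R V F).

Definition gv (v : V) : vec := [ffun A : {set V} => (v \in A)%:R].

Lemma Fgt0 : (0 < #|F|)%N.
Proof. by rewrite card_gt0. Qed.

Lemma ip_gv x z : ip (gv x) (gv z) = #|famxy F x z|%:R / #|F|%:R.
Proof.
rewrite /ip; congr (_ / _).
have -> : #|famxy F x z|%:R = \sum_(A in famxy F x z) (1:R) by rewrite sumr_const.
rewrite [RHS]big_mkcond [LHS]big_mkcond /=; apply: eq_bigr => A _.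
rewrite /famxy /famx !inE !ffunE.
by case: (A \in F); case: (x \in A); case: (z \in A); rewrite /= ?mulr1 ?mul0r ?mulr0.
Qed.

Lemma gv_norm z : ip (gv z) (gv z) <= 1.
Proof.
rewrite ip_gv ler_pdivrMr ?ltr0n ?Fgt0 // mul1r ler_nat.
apply: subset_leq_card; apply/subsetP => A.
by rewrite /famxy /famx !inE => /andP[/andP[-> _] _].
Qed.

Lemma unit_le1 L u z : ortho L -> u \in L -> `|ip (gv z) u| <= 1.
Proof.
move=> hL hu.
have hu1 : ortho [:: u] by split; [exact: ortho_unit hL hu | split].
have := bessel (gv z) hu1; rewrite big_seq1 => h.
have := gv_norm z => h2.
rewrite ler_norml; apply/andP; split; nra.
Qed.

Definition en L := \sum_(z : V) \sum_(u <- L) (ip (gv z) u) ^+ 2.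
Definition viol L y := \sum_(z : V) (ip (res L (gv y)) (gv z)) ^+ 2.

Lemma en_le L : ortho L -> en L <= #|V|%:R.
Proof.
move=> hL.
apply: (@le_trans _ _ (\sum_(z : V) (1 : R))).
  by apply: ler_sum => z _; apply: le_trans (bessel _ hL) (gv_norm z).
by rewrite sumr_const.
Qed.


Lemma extend L y (g : R) : ortho L -> 0 <= g -> g * #|V|%:R < viol L y ->
  exists u, ortho (u :: L) /\ en L + g * #|V|%:R <= en (u :: L).
Proof.
move=> hL hg hy.
have [hor hn] := res_props (gv y) hL.
move: hor hn hy; rewrite /viol; move: (res L (gv y)) => w hor hn hy.
have hs0 : 0 <= \sum_(u <- L) ip (gv y) u ^+ 2 by apply: sumr_ge0 => u _; exact: sqr_ge0.
have nw1 : ip w w <= 1 by rewrite hn; have := gv_norm y; lra.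
have nw0 : 0 < ip w w.
  rewrite lt_neqAle ip_ge0 andbT; apply/negP => /eqP h0.
  move: hy; rewrite big1 => [|z _]; last by rewrite ip_eq0 // expr0n.
  have : 0 <= g * #|V|%:R by rewrite mulr_ge0.
  lra.
set s := Num.sqrt (ip w w).
have s0 : 0 < s by rewrite sqrtr_gt0.
exists (sc (s^-1) w); split.
  split; first by rewrite ipZl ipZr mulrA -expr2 exprVn sqr_sqrtr ?mulVf // ?lt0r_neq0 // ltW.
  split => [u' hu'|//]; by rewrite ipZl hor // mulr0.
have -> : en (sc s^-1 w :: L) = \sum_(z : V) ip (gv z) (sc s^-1 w) ^+ 2 + en L.
  by rewrite /en -big_split /=; apply: eq_bigr => z _; rewrite big_cons.
have -> : \sum_(z : V) ip (gv z) (sc s^-1 w) ^+ 2 = (\sum_(z : V) ip w (gv z) ^+ 2) / ip w w.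
  rewrite mulr_suml; apply: eq_bigr => z _.
  by rewrite ipZr exprMn exprVn sqr_sqrtr ?ltW // mulrC ipC.
set S := \sum_(z : V) _ in hy *.
have S0 : 0 <= S by apply: sumr_ge0 => z _; exact: sqr_ge0.
have : S <= S / ip w w.
  by rewrite ler_pdivlMr //; nra.
lra.
Qed.

Lemma step_good (N0 : nat) L y : (0 < N0)%N -> ortho L ->
    (size L)%:R * (N0%:R^-1 * #|V|%:R) <= en L ->
    N0%:R^-1 * #|V|%:R < viol L y ->
    exists u, [/\ ortho (u :: L), ((size L).+1 <= N0)%N &
      ((size L).+1)%:R * (N0%:R^-1 * #|V|%:R) <= en (u :: L)].
Proof.
move=> hN0 hL he hy.
have g0 : 0 <= N0%:R^-1 :> R by rewrite invr_ge0 ler0n.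
have [u [hu he']] := extend hL g0 hy.
have hV : 0 < #|V|%:R :> R by rewrite ltr0n; apply/card_gt0P; exists y.
have he2 : ((size L).+1)%:R * (N0%:R^-1 * #|V|%:R) <= en (u :: L).
  rewrite -addn1 natrD mulrDl mul1r; lra.
exists u; split => //.
have := en_le hu => hle.
have : ((size L).+1)%:R * N0%:R^-1 <= 1 :> R.
  rewrite -(ler_pM2r hV) mul1r -mulrA; lra.
by rewrite ler_pdivrMr ?ltr0n // mul1r ler_nat.
Qed.

Lemma exists_good (N0 : nat) : (0 < N0)%N ->
  exists L, ortho L /\ (size L <= N0)%N /\
    forall y, viol L y <= N0%:R^-1 * #|V|%:R.
Proof.
move=> hN0.
suff H : forall k L, ortho L -> (size L <= N0)%N ->
    (size L)%:R * (N0%:R^-1 * #|V|%:R) <= en L -> (N0 - size L <= k)%N ->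
    exists L', ortho L' /\ (size L' <= N0)%N /\ forall y, viol L' y <= N0%:R^-1 * #|V|%:R.
  apply: (H N0 [::]) => //=; last by rewrite subn0.
  by rewrite mul0r /en big1 // => z _; rewrite big_nil.
elim=> [|k IH] L hL hs he hk;
  (case: (boolP [forall y, viol L y <= N0%:R^-1 * #|V|%:R]) => [/forallP hg | /forallPn [y hy]];
    first by exists L);
  rewrite -ltNge in hy;
  have [u [hu hs' he']] := step_good hN0 hL he hy.
  by move: hk hs'; lia.
apply: (IH (u :: L)) => //=.
lia.
Qed.

End Build.

Section Classify.
Variables (R : realType) (V : finType) (F : {set {set V}}).
Hypothesis hF : F != set0.
Local Notation vec := {ffun {set V} -> R}.
Local Notation ip := (@ip R V F).
Local Notation res := (@res R V F).
Local Notation ortho := (@ortho R V F).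
Local Notation gv := (@gv R V).

Lemma decomp L (v c : vec) :
  ip v c = \sum_(u <- L) ip v u * ip u c + ip (res L v) c.
Proof.
have {1}-> : v = P F L v + res L v by rewrite /res addrC subrK.
by rewrite ipDl /P ip_suml; congr (_ + _); apply: eq_bigr => u _; rewrite ipZl.
Qed.

Lemma diff_bound L (N0 : nat) (tau : R) x y z : ortho L -> (size L <= N0)%N -> 0 <= tau ->
  (forall i : 'I_(size L), `|ip (gv x) (nth 0 L i) - ip (gv y) (nth 0 L i)| <= tau) ->
  `|ip (gv x) (gv z) - ip (gv y) (gv z)| <=
    N0%:R * tau + `|ip (res L (gv x)) (gv z)| + `|ip (res L (gv y)) (gv z)|.
Proof.
move=> hL hs ht hi.
rewrite (decomp L (gv x)) (decomp L (gv y)).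
set rx := ip (res L (gv x)) _; set ry := ip (res L (gv y)) _.
have -> : \sum_(u <- L) ip (gv x) u * ip u (gv z) + rx -
          (\sum_(u <- L) ip (gv y) u * ip u (gv z) + ry) =
          \sum_(u <- L) (ip (gv x) u - ip (gv y) u) * ip u (gv z) + (rx - ry).
  by rewrite opprD addrACA -sumrB; congr (_ + _); apply: eq_bigr => u _; rewrite mulrBl.
apply: (le_trans (ler_normD _ _)); rewrite -addrA lerD //; last first.
  by apply: (le_trans (ler_normB _ _)).
apply: (le_trans (ler_norm_sum _ _ _)).
rewrite (big_nth 0) big_mkord.
apply: (@le_trans _ _ (\sum_(i < size L) tau)).
  apply: ler_sum => i _; rewrite normrM.
  have h1 := hi i.
  have h2 : `|ip (nth 0 L i) (gv z)| <= 1.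
    by rewrite ipC; exact: (unit_le1 hF z hL (mem_nth 0 (ltn_ord i))).
  have h3 := normr_ge0 (ip (gv x) (nth 0 L i) - ip (gv y) (nth 0 L i)).
  have h4 := normr_ge0 (ip (nth 0 L i) (gv z)).
  nra.
rewrite sumr_const card_ord -[tau *+ _]mulr_natl; apply: (ler_wpM2r ht).
by rewrite ler_nat.
Qed.


Lemma abs_sum_le (t : V -> R) (s : R) : 0 < s ->
  \sum_(z : V) t z ^+ 2 <= s ^+ 2 * #|V|%:R -> \sum_(z : V) `|t z| <= s * #|V|%:R.
Proof.
move=> s0 h.
have h2 : \sum_(z : V) (2 * s * `|t z|) <= \sum_(z : V) (t z ^+ 2 + s ^+ 2).
  apply: ler_sum => z _; rewrite -real_normK ?num_real //.
  have := sqr_ge0 (`|t z| - s); nra.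
rewrite big_split /= sumr_const -mulr_sumr -mulr_natr in h2.
move: h2 h; set S := \sum_(z : V) `|t z|; set Q := \sum_(z : V) t z ^+ 2.
have n0 : 0 <= #|V|%:R :> R by rewrite ler0n.
move=> h2 h; nra.
Qed.

Variables (K : nat).
Hypothesis hK : (0 < K)%N.
Definition N0 := (16 * K ^ 2)%N.
Definition T := (64 * K ^ 3)%N.
Definition Mx := (128 * K ^ 3)%N.

Definition key (L : seq vec) (y : V) : {ffun 'I_(size L) -> 'I_Mx.+1} :=
  [ffun i : 'I_(size L) => inord (Num.truncn ((ip (gv y) (nth (0 : vec) L i) + 1) * T%:R))].

Lemma trunc_bound L y (i : 'I_(size L)) : ortho L ->
  leq (Num.truncn ((ip (gv y) (nth (0 : vec) L i) + 1) * T%:R)) Mx.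
Proof.
move=> hL.
have := unit_le1 hF y hL (mem_nth 0 (ltn_ord i)); rewrite ler_norml => /andP[h1 h2].
have T0 : 0 <= T%:R :> R by rewrite ler0n.
have x0 : 0 <= (ip (gv y) (nth (0 : vec) L i) + 1) * T%:R by apply: mulr_ge0 => //; lra.
have [h3 _] := andP (Num.Theory.truncn_itv x0).
rewrite -(ler_nat R); apply: (le_trans h3).
have -> : Mx%:R = 2 * T%:R :> R by rewrite /Mx /T -natrM mulnA.
nra.
Qed.

Lemma key_close L x y : ortho L -> key L x = key L y ->
  forall i : 'I_(size L), `|ip (gv x) (nth (0 : vec) L i) - ip (gv y) (nth (0 : vec) L i)| <= T%:R^-1.
Proof.
move=> hL hk i.
move/ffunP: hk => /(_ i); rewrite !ffunE => /(congr1 val); rewrite /= !inordK ?ltnS ?trunc_bound // => e.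
have := unit_le1 hF x hL (mem_nth 0 (ltn_ord i)); rewrite ler_norml => /andP[hx1 hx2].
have := unit_le1 hF y hL (mem_nth 0 (ltn_ord i)); rewrite ler_norml => /andP[hy1 hy2].
set a := ip (gv x) _ in e hx1 hx2 *; set b := ip (gv y) _ in e hy1 hy2 *.
have T0 : 0 < T%:R :> R by rewrite ltr0n /T muln_gt0 expn_gt0 hK.
have xa : 0 <= (a + 1) * T%:R by apply: mulr_ge0; [lra | exact: ltW T0].
have xb : 0 <= (b + 1) * T%:R by apply: mulr_ge0; [lra | exact: ltW T0].
have /andP[ha1 ha2] := Num.Theory.truncn_itv xa.
have /andP[hb1 hb2] := Num.Theory.truncn_itv xb.
rewrite e in ha1 ha2; rewrite -natr1 in ha2 hb2.
rewrite -[T%:R^-1]mul1r ler_pdivlMr // -(ger0_norm (ltW T0)) -normrM ler_norml.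
have -> : (a - b) * T%:R = (a + 1) * T%:R - (b + 1) * T%:R by ring.
move: ha1 ha2 hb1 hb2; set p := (a + 1) * T%:R; set q := (b + 1) * T%:R.
move=> ha1 ha2 hb1 hb2; apply/andP; split; lra.
Qed.



Lemma L1_bound L x y : ortho L -> (size L <= N0)%N ->
  (forall y, viol F L y <= N0%:R^-1 * #|V|%:R) -> key L x = key L y ->
  \sum_(z : V) `|ip (gv x) (gv z) - ip (gv y) (gv z)| <= #|V|%:R / K%:R.
Proof.
move=> hL hs hG hk.
have k0 : 0 < K%:R :> R by rewrite ltr0n.
have kn0 : K%:R != 0 :> R by rewrite lt0r_neq0.
set s : R := (4%:R * K%:R)^-1.
have s0 : 0 < s by rewrite invr_gt0 mulr_gt0 // ltr0n.
have eN : N0%:R^-1 = s ^+ 2 :> R.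
  by rewrite /s /N0 natrM natrX; field.
have eT : N0%:R * T%:R^-1 = s :> R.
  by rewrite /s /N0 /T !natrM; field.
have ek : K%:R^-1 = 4%:R * s :> R by rewrite /s; field.
have tau0 : 0 <= T%:R^-1 :> R by rewrite invr_ge0 ler0n.
have gx : viol F L x <= s ^+ 2 * #|V|%:R by rewrite -eN; exact: hG.
have gy : viol F L y <= s ^+ 2 * #|V|%:R by rewrite -eN; exact: hG.
have hx := @abs_sum_le (fun z => ip (res L (gv x)) (gv z)) s s0 gx.
have hy := @abs_sum_le (fun z => ip (res L (gv y)) (gv z)) s s0 gy.
apply: (@le_trans _ _ (\sum_(z : V) (N0%:R * T%:R^-1 + `|ip (res L (gv x)) (gv z)| + `|ip (res L (gv y)) (gv z)|))).
  apply: ler_sum => z _; exact: (diff_bound z hL hs tau0 (key_close hL hk)).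
rewrite !big_split /= sumr_const eT -mulr_natr.
rewrite /= in hx hy.
have n0 : 0 <= #|V|%:R :> R by rewrite ler0n.
rewrite mulrC ek; nra.
Qed.


End Classify.

Lemma card_imset_fact (T1 T2 U : finType) (g : T1 -> T2) (h : T2 -> U) (D : {set T1}) :
  (#|[set h (g x) | x in D]| <= #|[set g x | x in D]|)%N.
Proof.
have -> : [set h (g x) | x in D] = [set (h \o g) x | x in D] by [].
by rewrite (imset_comp h g); apply: leq_imset_card.
Qed.

Lemma main_cluster (R : realType) (V : finType) (F : {set {set V}}) (hF : F != set0)
  (K : nat) (hK : (0 < K)%N) :
  exists P : {set {set V}}, [/\ partition P [set: V],
    (forall X, X \in P -> forall x y, x \in X -> y \in X ->
      \sum_(z : V) `|ip F (gv R x) (gv R z) - ip F (gv R y) (gv R z)| <= #|V|%:R / K%:R) &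
    (#|P| <= 2 ^ ((Mx K).+1 * N0 K))%N].
Proof.
have hN0 : (0 < N0 K)%N by rewrite /N0 muln_gt0 expn_gt0 hK.
have [L [hL [hs hG]]] := exists_good R hF hN0.
exists (preim_partition (key F K L) [set: V]); split.
- exact: preim_partitionP.
- move=> X /imsetP [x0 _ ->] x y; rewrite !inE => /eqP hx /eqP hy.
  by apply: (L1_bound hF hK hL hs hG); rewrite -hx -hy.
- rewrite /preim_partition /equivalence_partition.
  apply: (leq_trans (card_imset_fact (key F K L) (fun k => [set y in [set: V] | k == key F K L y]) _)).
  apply: (leq_trans (max_card _)).
  rewrite card_ffun !card_ord.
  apply: (leq_trans (leq_pexp2l _ hs)) => //.
  rewrite expnM leq_exp2r //.
  exact: ltnW (ltn_expl _ (isT : (1 < 2)%N)).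
Qed.

Lemma eval_p (R : realType) (a b : R) :
  eval2 ((66048%:R *: 'X^5 : {poly R})%:P * 'X^5) a b = 66048%:R * a ^+ 5 * b ^+ 5.
Proof. rewrite /eval2 !hornerE; ring. Qed.

Theorem lemma5p5 (R : realType) :
  exists p : {poly {poly R}},
    forall eps eta : R, 0 < eps <= 1 -> 0 < eta <= 1 ->
    forall (V : finType) (F : {set {set V}}), F != set0 ->
    exists P : {set {set V}},
      is_clustering F eps eta P /\
      (#|P|%:R : R) <= 2 `^ (eval2 p eps^-1 eta^-1).
Proof.
exists ((66048%:R *: 'X^5 : {poly R})%:P * 'X^5).
move=> eps eta /andP[e0 e1] /andP[n0 n1] V F hF.
have a1 : 1 <= eps^-1 by rewrite invf_ge1.
have b1 : 1 <= eta^-1 by rewrite invf_ge1.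
set a := eps^-1 in a1 *; set b := eta^-1 in b1 *.
set m := a * b.
have m1 : 1 <= m by rewrite /m; nra.
have m0 : 0 <= m by lra.
have /andP[t1 t2] := Num.Theory.truncn_itv m0.
set K := (Num.truncn m).+1.
have hK : (0 < K)%N by [].
have [P [hP hcl hcard]] := main_cluster R hF hK.
set k : R := K%:R.
have kk : k = (Num.truncn m)%:R + 1 by rewrite /k /K natr1.
have k1 : 1 <= k by rewrite /k ler1n.
have k0 : 0 < k by lra.
exists P; split.
- split => // X hX x y hx hy.
  have hS := hcl X hX x y hx hy.
  set B := @D0 R V F x :\: Deps F eps y.
  set f := fun z => `|ip F (gv R x) (gv R z) - ip F (gv R y) (gv R z)|.
  have Fp : 0 < #|F|%:R :> R by rewrite ltr0n (Fgt0 hF).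
  have hB : forall z, z \in B -> eps <= f z.
    move=> z; rewrite /B inE => /andP[hnot hin].
    move: hnot hin; rewrite /D0 /Deps !inE mul0r -ltNge => hnot hin.
    have cx : #|famxy F x z|%:R = 0 :> R by apply/eqP; rewrite eq_le hin ler0n.
    rewrite /f !ip_gv cx mul0r sub0r normrN ger0_norm ?divr_ge0 ?ler0n //.
    by rewrite ler_pdivlMr // ltW.
  have h1 : eps * #|B|%:R <= \sum_(z in B) f z.
    by rewrite mulr_natr -sumr_const; apply: ler_sum => z; exact: hB.
  have h2 : \sum_(z in B) f z <= \sum_(z : V) f z.
    rewrite [X in _ <= X](bigID (fun z => z \in B)) /= lerDl.
    by apply: sumr_ge0 => z _; rewrite /f normr_ge0.
  have h3 : #|V|%:R / k <= eps * eta * #|V|%:R.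
    have ek : k^-1 <= eps * eta.
      have -> : eps * eta = m^-1 by rewrite /m /a /b invfM !invrK.
      by rewrite lef_pV2 ?posrE // ?(lt_le_trans _ m1) // ltW.
    have := ler0n R #|V|; nra.
  have hfin : eps * #|B|%:R <= eps * (eta * #|V|%:R) by rewrite /f in h1 h2; lra.
  by move: hfin; rewrite ler_pM2l.
- rewrite eval_p.
  apply: (@le_trans _ _ (2 ^ ((Mx K).+1 * N0 K))%:R); first by rewrite ler_nat.
  rewrite natrX.
  have -> : (2 ^+ ((Mx K).+1 * N0 K) : R) = 2 `^ ((Mx K).+1 * N0 K)%:R by rewrite powR_mulrn.
  apply: ler_powR; first lra.
  have eL : ((Mx K).+1 * N0 K)%:R = 2048 * k ^+ 5 + 16 * k ^+ 2 :> R.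
    by rewrite /k /Mx /N0 -addn1 !natrM !natrD !natrM; ring.
  have eR : 66048%:R * a ^+ 5 * b ^+ 5 = 2064 * (2 * m) ^+ 5 :> R by rewrite /m; ring.
  rewrite eL eR.
  have km : k <= 2 * m by lra.
  have hk5 : k ^+ 5 <= (2 * m) ^+ 5 by rewrite lerXn2r // ?nnegrE; lra.
  have hk3 : 1 <= k ^+ 3 by rewrite exprn_ege1.
  have hk25 : k ^+ 2 <= k ^+ 5.
    have -> : k ^+ 5 = k ^+ 2 * k ^+ 3 by rewrite -exprD.
    have := exprn_ge0 2 (ltW k0); nra.
  lra.
Qed.
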